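(* Let $G_1$ and $G_2$ be connected graphs, where $G_1$ has at least two vertices. Then $$\chi_d^t(G_1\star G_2)\leq \chi_d^t(G_1)+|V(G_2)|.$$
   Context: All graphs are simple and finite. A total dominator coloring (TD-coloring) of a graph $G$ with no isolated vertex is a proper vertex coloring of $G$ in which every vertex of $G$ is adjacent to every vertex of some color class (a color class being the set of all vertices receiving a given color). The total dominator chromatic number (TDC-number) $\chi_d^t(G)$ is the minimum number of colors in a TD-coloring of $G$. The neighbourhood corona $G_1\star G_2$ of graphs $G_1$ and $G_2$ is the graph obtained by taking one copy of $G_1$ and $|V(G_1)|$ copies of $G_2$, and, for each $i$, joining every neighbour (in $G_1$) of the $i$-th vertex of $G_1$ to every vertex of the $i$-th copy of $G_2$. *)

(* Defs.v *)
From mathcomp Require Import all_boot.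
Set Implicit Arguments. Unset Strict Implicit. Unset Printing Implicit Defensive.

Definition simple_graph (T : finType) (e : rel T) : Prop :=
  symmetric e /\ irreflexive e.

Definition connected_graph (T : finType) (e : rel T) : Prop :=
  forall x y : T, connect e x y.

Definition proper_coloring (T : finType) (C : eqType) (e : rel T) (c : T -> C) : bool :=
  [forall x, forall y, e x y ==> (c x != c y)].

Definition td_coloring (T : finType) (C : finType) (e : rel T) (c : T -> C) : bool :=
  proper_coloring e c &&
  [forall x, exists k : C, [exists y, c y == k] &&
                           [forall y, (c y == k) ==> e x y]].

Definition num_colors (T : finType) (C : finType) (c : T -> C) : nat :=
  #|[set c x | x : T]|.

(* WLOG colors are taken in 'I_#|T| (any coloring of T uses at most #|T|
   colors and can be relabeled).  The default #|T|.+1 is only reached when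
   no TD-coloring exists (graph with an isolated vertex). *)
Definition tdc_number (T : finType) (e : rel T) : nat :=
  \big[minn/#|T|.+1]_(c : {ffun T -> 'I_#|T|} | td_coloring e c) num_colors c.

(* Neighbourhood corona G1 * G2: vertices are inl v (copy of G1) and
   inr (i, x) (vertex x of the i-th copy of G2). *)
Definition ncorona_rel (T1 T2 : finType) (e1 : rel T1) (e2 : rel T2)
  : rel (T1 + (T1 * T2)) :=
  fun u v =>
    match u, v with
    | inl a, inl b => e1 a b
    | inr (i, x), inr (j, y) => (i == j) && e2 x y
    | inl a, inr (i, _) => e1 a i
    | inr (i, _), inl a => e1 i a
    end.

(* Main.v *)
Require Import Defs.
From mathcomp Require Import all_boot.
From mathcomp Require Import zify.

Section S.
Variables (T1 T2 : finType) (e1 : rel T1) (e2 : rel T2).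
Hypothesis He2 : irreflexive e2.
Hypothesis Hn : 0 < #|T1|.
Local Notation T := (T1 + (T1 * T2))%type.
Local Notation E := (ncorona_rel e1 e2).
Variable c : {ffun T1 -> 'I_#|T1|}.
Hypothesis Hc : td_coloring e1 c.

Definition fcol (v : T) : nat :=
  match v with inl a => val (c a) | inr (_, x) => #|T1| + enum_rank x end.

Lemma fcol_lt v : fcol v < #|{: T}|.
Proof.
rewrite card_sum card_prod.
case: v => [a|[i x]] /=.
  by apply: leq_trans (ltn_ord (c a)) (leq_addr _ _).
rewrite ltn_add2l; apply: leq_trans (ltn_ord (enum_rank x)) _.
by rewrite -{1}(mul1n #|{: T2}|) leq_mul2r Hn orbT.
Qed.

Definition dcol : {ffun T -> 'I_#|{: T}|} := [ffun v => Ordinal (fcol_lt v)].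

Lemma dcolE v : val (dcol v) = fcol v.
Proof. by rewrite ffunE. Qed.

Lemma dcol_eq u v : (dcol u == dcol v) = (fcol u == fcol v).
Proof. by rewrite -val_eqE /= !dcolE. Qed.

Lemma dcol_td : td_coloring E dcol.
Proof.
case/andP: Hc => /forallP Hp /forallP Htd.
apply/andP; split.
  apply/forallP => u; apply/forallP => v; apply/implyP => Euv.
  rewrite dcol_eq.
  case: u Euv => [a|[i x]]; case: v => [b|[j y]] //= Euv.
  - by have := implyP (forallP (Hp a) b) Euv; rewrite -val_eqE.
  - have := ltn_ord (c a); apply: contraL => /eqP ->; by rewrite -leqNgt leq_addr.
  - have := ltn_ord (c b); apply: contraL => /eqP <-; by rewrite -leqNgt leq_addr.
  - case/andP: Euv => _ Exy; rewrite eqn_add2l.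
    apply: contraL Exy => /eqP/ord_inj/enum_rank_inj ->; by rewrite He2.
apply/forallP => v.
pose a := match v with inl a => a | inr (i, _) => i end.
have Hva : forall b, E v (inl b) = e1 a b by rewrite /a; case: (v) => [?|[? ?]].
have [k /andP [/existsP [y0 Hy0] /forallP Hk]] := existsP (Htd a).
have Hle : #|T1| <= #|{: T}| by rewrite card_sum leq_addr.
apply/existsP; exists (widen_ord Hle k); apply/andP; split.
  apply/existsP; exists (inl y0); rewrite -val_eqE /= dcolE /=.
  by rewrite (eqP Hy0).
apply/forallP => y; apply/implyP; rewrite -val_eqE /= dcolE.
case: y => [b|[j x]] /= H.
  rewrite Hva; have := implyP (Hk b); rewrite -val_eqE /= H; exact.
have := ltn_ord k; move: H => /eqP <-; by rewrite ltnNge leq_addr.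
Qed.

Lemma dcol_num (a0 : T1) : num_colors dcol <= num_colors c + #|T2|.
Proof.
have Hle : #|T1| <= #|{: T}| by rewrite card_sum leq_addr.
rewrite /num_colors.
have sub : [set dcol v | v : T] \subset
   (widen_ord Hle @: [set c x | x : T1]) :|: [set dcol (inr (a0, x)) | x : T2].
  apply/subsetP => _ /imsetP [v _ ->]; rewrite in_setU.
  case: v => [a|[i x]].
    apply/orP; left; apply/imsetP; exists (c a); first by apply: imset_f.
    by apply: val_inj; rewrite /= dcolE.
  apply/orP; right; apply/imsetP; exists x => //.
  by apply: val_inj; rewrite /= !dcolE.
apply: leq_trans (subset_leq_card sub) _.
apply: leq_trans (leq_card_setU _ _) _.
apply: leq_add; first exact: leq_imset_card.
apply: leq_trans (leq_imset_card _ _) _; exact: leqnn.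
Qed.

End S.

Lemma bigmin_le (I : finType) (P : pred I) (F : I -> nat) x j :
  P j -> \big[minn/x]_(i | P i) F i <= F j.
Proof.
move=> Pj; rewrite -[X in X <= _]/(\big[minn/x]_(i <- index_enum I | P i) F i).
have : j \in index_enum I by rewrite mem_index_enum.
elim: (index_enum I) => // a s IH; rewrite in_cons big_cons.
case/predU1P => [<-|js]; first by rewrite Pj geq_minl.
case: (P a); last exact: IH.
by apply: leq_trans (geq_minr _ _) (IH js).
Qed.

Theorem theorem2 (T1 T2 : finType) (e1 : rel T1) (e2 : rel T2) :
  simple_graph e1 -> simple_graph e2 ->
  connected_graph e1 -> connected_graph e2 ->
  1 < #|T1| ->
  tdc_number (ncorona_rel e1 e2) <= tdc_number e1 + #|T2|.
Proof.
move=> [S1 I1] [S2 I2] C1 C2 H1.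
have Hn : 0 < #|T1| by apply: ltnW.
have [a0 _] := card_gt0P Hn.
have key : forall c : {ffun T1 -> 'I_#|T1|}, td_coloring e1 c ->
    tdc_number (ncorona_rel e1 e2) <= num_colors c + #|T2|.
  move=> c Hc.
  apply: leq_trans _ (dcol_num _ T2 Hn c a0).
  rewrite /tdc_number; apply: bigmin_le.
  exact: (@dcol_td T1 T2 e1 e2 I2 Hn c Hc).
have neigh : forall a : T1, exists b, e1 a b.
  move=> a.
  have [b Hb] : exists b, b != a.
    have : 0 < #|predC1 a| by rewrite cardC1; move: H1; case: #|T1| => [|[|n]].
    by case/card_gt0P => b; rewrite inE; exists b.
  have := C1 a b.
  case/connectP => p.
  case: p => [_ /= E | x p /= /andP [Eax _] _]; last by exists x.
  by rewrite E eqxx in Hb.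
pose c0 : {ffun T1 -> 'I_#|T1|} := [ffun a => enum_rank a].
have Hc0 : td_coloring e1 c0.
  apply/andP; split.
    apply/forallP => x; apply/forallP => y; apply/implyP => Exy.
    rewrite !ffunE; apply: contraL Exy => /eqP/enum_rank_inj ->; by rewrite I1.
  apply/forallP => a; have [b Hb] := neigh a.
  apply/existsP; exists (c0 b); apply/andP; split.
    by apply/existsP; exists b.
  apply/forallP => y; apply/implyP; rewrite !ffunE => /eqP/enum_rank_inj ->.
  exact: Hb.
have hc0 : num_colors c0 <= #|T1|.
  rewrite /num_colors; apply: leq_trans (max_card _) _; by rewrite card_ord.
rewrite /tdc_number.
apply: (big_ind (fun m => tdc_number (ncorona_rel e1 e2) <= m + #|T2|)).
- apply: leq_trans (key _ Hc0) _; rewrite leq_add2r; exact: leq_trans hc0 _.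
- move=> x y Hx Hy; rewrite /minn; by case: ifP.
- move=> c Hc; exact: key.
Qed.
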